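(* For $0<x<1$, as power series in $t$ (convergent for $t$ near $0$), \[ \sum_{n=0}^\infty p_{n-1}(x)\frac{t^n}{n!} = \frac{e^{(1-x)t}\left(\arcsin\!\big(x^{1/2}e^{(1-x)t}\big) - \arcsin\!\big(x^{1/2}\big)\right)}{x^{1/2}\left(1-xe^{2(1-x)t}\right)^{1/2}}. \]
   Context: Define polynomial sequences $(p_k(x))_{k\ge -1}$ and $(q_k(x))_{k\ge -1}$ by $p_{-1}(x)=0$, $q_{-1}(x)=1$ and, for $k\ge -1$, $p_{k+1}(x) = 2(kx+1)p_k(x) + 2x(1-x)p_k'(x) + q_k(x)$, $q_{k+1}(x) = (2(k+1)x+1)q_k(x) + 2x(1-x)q_k'(x)$. *)

(* Defs.v *)
From Stdlib Require Import Reals.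
From Coquelicot Require Import Coquelicot.
From mathcomp Require Import all_boot all_order all_algebra.
From mathcomp Require Import Rstruct.
Import GRing.Theory.

Local Open Scope ring_scope.

(* pq n = (p_{n-1}, q_{n-1}) for n : nat, i.e. index shifted by one so that
   pq 0 = (p_{-1}, q_{-1}) = (0, 1). With k = n - 1 the recurrences read
   p_{k+1} = 2(kx+1) p_k + 2x(1-x) p_k' + q_k,
   q_{k+1} = (2(k+1)x+1) q_k + 2x(1-x) q_k'. *)
Fixpoint pq (n : nat) : {poly R} * {poly R} :=
  match n with
  | O => (0, 1)
  | S m =>
      let p := (pq m).1 in
      let q := (pq m).2 in
      let k : R := (m%:R - 1) in
      ((2%:R * (k *: 'X + 1)) * p + (2%:R *: ('X * (1 - 'X))) * p^`() + q,
       ((2%:R * (m%:R)) *: 'X + 1) * q + (2%:R *: ('X * (1 - 'X))) * q^`())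
  end.

Definition pshift (n : nat) : {poly R} := (pq n).1.
Definition qshift (n : nat) : {poly R} := (pq n).2.

Definition p_eval (n : nat) (x : R) : R := (pshift n).[x].

(* Main.v *)
Require Import Defs.
From Stdlib Require Import Reals Factorial Lra.
From Coquelicot Require Import Coquelicot.
Local Open Scope R_scope.


Definition ff (x t : R) : R :=
  exp ((1 - x) * t) *
           (asin (sqrt x * exp ((1 - x) * t)) - asin (sqrt x)) /
         (sqrt x * sqrt (1 - x * exp (2 * (1 - x) * t))).

Lemma asin_deriv u : -1 < u < 1 -> is_derive asin u (1 / sqrt (1 - u²)).
Proof.
intros H. apply is_derive_Reals.
apply (derive_pt_eq_1 _ _ _ (derivable_pt_asin u H)).
apply derive_pt_asin.
Qed.

Lemma ff_deriv x t : 0 < x < 1 -> x * exp (2 * (1 - x) * t) < 1 ->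
  is_derive (ff x) t ((1 - x) * (ff x t + exp (2 * (1 - x) * t)) / (1 - x * exp (2 * (1 - x) * t))).
Proof.
intros hx hE.
assert (hE2 : exp (2 * (1 - x) * t) = exp ((1 - x) * t) * exp ((1 - x) * t)).
{ rewrite <- exp_plus; f_equal; ring. }
assert (he : 0 < exp ((1 - x) * t)) by apply exp_pos.
assert (hr : 0 < sqrt x) by (apply sqrt_lt_R0; lra).
assert (hrr : sqrt x * sqrt x = x) by (apply sqrt_sqrt; lra).
assert (hW : 0 < 1 - x * exp (2 * (1 - x) * t)) by lra.
assert (hw : 0 < sqrt (1 - x * exp (2 * (1 - x) * t))) by (apply sqrt_lt_R0; lra).
assert (hww : sqrt (1 - x * exp (2 * (1 - x) * t)) * sqrt (1 - x * exp (2 * (1 - x) * t))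
   = 1 - x * exp (2 * (1 - x) * t)) by (apply sqrt_sqrt; lra).
assert (hu2 : (sqrt x * exp ((1 - x) * t))² = x * exp (2 * (1 - x) * t)).
{ unfold Rsqr. rewrite hE2. transitivity ((sqrt x * sqrt x) * (exp ((1 - x) * t) * exp ((1 - x) * t))); [ring | rewrite hrr; ring]. }
assert (hu : -1 < sqrt x * exp ((1 - x) * t) < 1).
{ assert (0 < sqrt x * exp ((1 - x) * t)) by (apply Rmult_lt_0_compat; lra).
  split; [lra|]. apply Rsqr_incrst_0; try lra. rewrite hu2. unfold Rsqr. lra. }
assert (hder := asin_deriv _ hu).
unfold ff.
auto_derive.
{ split. { exists (1 / sqrt (1 - (sqrt x * exp ((1 - x) * t))²)). exact hder. }
  replace (1 + - (x * exp (2 * (1 - x) * t))) with (1 - x * exp (2 * (1 - x) * t)) by ring.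
  split; [lra|]. split; [|exact I]. apply Rgt_not_eq, Rmult_lt_0_compat; lra. }
replace (Derive (fun x0 : R => asin x0) (sqrt x * exp ((1 - x) * t))) with (1 / sqrt (1 - (sqrt x * exp ((1-x)*t))²)) by (symmetry; apply is_derive_unique; exact hder).
rewrite hu2.
replace (1 + - (x * exp (2 * (1 - x) * t))) with (1 - x * exp (2 * (1 - x) * t)) by ring.
rewrite <- hww.
set (w := sqrt (1 - x * exp (2 * (1 - x) * t))) in *.
rewrite hE2 in *.
set (e := exp ((1 - x) * t)) in *.
set (r := sqrt x) in *.
set (a := asin (r * e) - asin r).
replace (asin (r * e) + - asin r) with a by (unfold a; ring).
clearbody w e r a.
assert (hx2 : x = (1 - w * w) / (e * e)) by (rewrite hww; field; lra).
rewrite sqrt_square by lra.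
clear hE2 hrr hW hww hu2 hu hder hE.
subst x.
field. lra.
Qed.
Ltac slra := lra.
Ltac snra := nra.
Ltac sfield := field.
Ltac sring := ring.

From mathcomp Require Import all_boot all_order all_algebra.
From mathcomp Require Import Rstruct ring lra.
Import Order.TTheory GRing.Theory Num.Theory.
Local Open Scope ring_scope.

Definition Lop (a : nat -> {poly R}) (n : nat) : {poly R} :=
  a n.+1 - 2%:R * n%:R * 'X * a n - 2%:R * 'X * (1 - 'X) * (a n)^`().

Definition conv (a b : nat -> {poly R}) (n : nat) : {poly R} :=
  \sum_(k < n.+1) 'C(n, k)%:R * (a k * b (n - k)%N).

Lemma Lop_ext a b n : (forall k, a k = b k) -> Lop a n = Lop b n.
Proof. by move=> h; rewrite /Lop !h. Qed.

Lemma conv_ext a a' b b' n : (forall k, a k = a' k) -> (forall k, b k = b' k) ->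
  conv a b n = conv a' b' n.
Proof. by move=> ha hb; rewrite /conv; apply: eq_bigr => k _; rewrite ha hb. Qed.

Lemma LopD a b n : Lop (fun k => a k + b k) n = Lop a n + Lop b n.
Proof. rewrite /Lop derivD; ring. Qed.

Lemma LopB a b n : Lop (fun k => a k - b k) n = Lop a n - Lop b n.
Proof. rewrite /Lop derivB; ring. Qed.

Lemma LopM c a n : Lop (fun k => c * a k) n =
   c * Lop a n - 2%:R * 'X * (1 - 'X) * c^`() * a n.
Proof. rewrite /Lop derivM; ring. Qed.

Lemma Lop_shift a n : Lop (fun k => a k.+1) n = Lop a n.+1 + 2%:R * 'X * a n.+1.
Proof. rewrite /Lop -natr1; ring. Qed.

Lemma convDl a b c n : conv (fun k => a k + b k) c n = conv a c n + conv b c n.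
Proof. rewrite /conv -big_split /=; apply: eq_bigr => k _; ring. Qed.
Lemma convDr a b c n : conv c (fun k => a k + b k) n = conv c a n + conv c b n.
Proof. rewrite /conv -big_split /=; apply: eq_bigr => k _; ring. Qed.
Lemma convBl a b c n : conv (fun k => a k - b k) c n = conv a c n - conv b c n.
Proof. rewrite /conv -sumrB /=; apply: eq_bigr => k _; ring. Qed.
Lemma convBr a b c n : conv c (fun k => a k - b k) n = conv c a n - conv c b n.
Proof. rewrite /conv -sumrB /=; apply: eq_bigr => k _; ring. Qed.
Lemma convMl d a c n : conv (fun k => d * a k) c n = d * conv a c n.
Proof. rewrite /conv mulr_sumr; apply: eq_bigr => k _; ring. Qed.
Lemma convMr d a c n : conv c (fun k => d * a k) n = d * conv c a n.
Proof. rewrite /conv mulr_sumr; apply: eq_bigr => k _; ring. Qed.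

Lemma conv_S a b n : conv a b n.+1 =
  conv (fun k => a k.+1) b n + conv a (fun k => b k.+1) n.
Proof.
rewrite /conv big_ord_recl /=.
under eq_bigr => i _ do rewrite /bump /= add1n binS natrD mulrDl.
rewrite big_split /= (addrC (\sum_(i < n.+1) 'C(n, i.+1)%:R * _)) addrCA.
congr (_ + _).
rewrite bin0 subn0 [in LHS]big_ord_recr /= (bin_small (ltnSn n)) mul0r addr0. rewrite [RHS]big_ord_recl /= bin0 subn0.
congr (_ + _); apply: eq_bigr => i _; rewrite /bump /= add1n subSS.
by rewrite -subSn // -ltnS.
Qed.

Lemma Leibniz a b n : Lop (conv a b) n = conv (Lop a) b n + conv a (Lop b) n.
Proof.
rewrite {1}/Lop conv_S /conv -big_split /= raddf_sum /= !mulr_sumr.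
rewrite -!sumrB -big_split /=.
apply: eq_bigr => k _.
have hk : (k <= n)%N by rewrite -ltnS.
rewrite /Lop !mulr_natl !derivE -subSn // natrB //.
ring.
Qed.

Definition Ep (n : nat) : {poly R} := (2%:R * (1 - 'X)) ^+ n.

Lemma polyC_sc (c : R) (p : {poly R}) : c *: p = c%:P * p.
Proof. by rewrite mul_polyC. Qed.

Lemma LF n : Lop pshift n = 2%:R * (1 - 'X) * pshift n + qshift n.
Proof.
rewrite /Lop /pshift /qshift /= !polyC_sc rmorphB /= rmorph1 !rmorph_nat.
ring.
Qed.

Lemma LG n : Lop qshift n = qshift n.
Proof.
rewrite /Lop /pshift /qshift /= !polyC_sc !rmorphM /= !rmorph_nat -natr1.
ring.
Qed.

Lemma dnat n : (n%:R : {poly R})^`() = 0.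
Proof. by rewrite derivMn -polyC1 derivC mul0rn. Qed.

Lemma d1X : (2%:R * (1 - 'X) : {poly R})^`() = - 2%:R.
Proof. by rewrite derivM dnat mul0r add0r derivB -polyC1 derivC derivX sub0r mulrN1. Qed.

Lemma dEp n : 2%:R * (1 - 'X) * (Ep n)^`() = - 2%:R * n%:R * Ep n.
Proof.
elim: n => [|n IH]; first by rewrite /Ep expr0 -polyC1 derivC !(mulr0, mulr0n, mulr1).
rewrite /Ep exprS derivM -/(Ep n) d1X mulrDr.
rewrite IH -natr1.
ring.
Qed.

Lemma LE n : Lop Ep n = 2%:R * (1 - 'X) * Ep n.
Proof.
rewrite /Lop.
have -> : 2%:R * 'X * (1 - 'X) * (Ep n)^`() = 'X * (2%:R * (1 - 'X) * (Ep n)^`()) by ring.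
rewrite dEp /Ep exprS; ring.
Qed.

Lemma Lzero (c : {poly R}) Y : (forall n, Lop Y n = c * Y n) -> Y 0%N = 0 ->
  forall n, Y n = 0.
Proof.
move=> h h0; elim=> // n IH.
have := h n; rewrite /Lop IH derivE mulr0 subr0 !mulr0 subr0 => ->; by [].
Qed.

Definition sh (a : nat -> {poly R}) k := a k.+1.

Lemma Lsh a n : Lop (sh a) n = Lop a n.+1 + 2%:R * 'X * a n.+1.
Proof. exact: Lop_shift. Qed.

Lemma dX : ('X : {poly R})^`() = 1. Proof. by rewrite derivX. Qed.
Lemma d1mX : (1 - 'X : {poly R})^`() = -1.
Proof. by rewrite derivB -polyC1 derivC derivX sub0r. Qed.

Lemma convLE b n : conv (Lop Ep) b n = 2%:R * (1 - 'X) * conv Ep b n.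
Proof. rewrite -convMl; apply: conv_ext => // k; exact: LE. Qed.

Definition Qs n := qshift n.+1 - 'X * conv Ep (sh qshift) n - (1 - 'X) * qshift n.

Lemma LQ n : Lop Qs n = (1 + 2%:R * 'X) * Qs n.
Proof.
rewrite /Qs LopB LopB (LopM 'X (conv Ep (sh qshift))) LopM dX d1mX.
rewrite (Lop_shift qshift) Leibniz convLE !LG.
have -> : conv Ep (Lop (sh qshift)) n = (1 + 2%:R * 'X) * conv Ep (sh qshift) n.
  rewrite -convMr; apply: conv_ext => // k; rewrite Lsh LG /sh; ring.
rewrite /sh; ring.
Qed.

Lemma Qs0 n : Qs n = 0.
Proof.
move: n; apply: (Lzero _ _ LQ).
rewrite /Qs /conv big_ord_recl big_ord0 /= /Ep /sh /qshift /pshift /=.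
rewrite !polyC_sc !rmorphM /= !rmorph_nat !derivE.
rewrite expr0 bin0 !(mulr0, mul0r, addr0, mulr1, add0r, mul1r).
ring.
Qed.

Definition Rs n := pshift n.+1 - 'X * conv Ep (sh pshift) n - (1 - 'X) * (pshift n + Ep n).

Lemma LR n : Lop Rs n = 2%:R * Rs n.
Proof.
rewrite /Rs LopB LopB (LopM 'X (conv Ep (sh pshift))) LopM dX d1mX LopD.
rewrite (Lop_shift pshift) Leibniz convLE !LF LE.
have -> : conv Ep (Lop (sh pshift)) n =
   2%:R * conv Ep (sh pshift) n + conv Ep (sh qshift) n.
  rewrite -convMr -convDr; apply: conv_ext => // k; rewrite Lsh LF /sh; ring.
apply/eqP; rewrite -subr_eq0; apply/eqP; rewrite -(Qs0 n) /Qs /sh; ring.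
Qed.

Lemma Rs0 n : Rs n = 0.
Proof.
move: n; apply: (Lzero _ _ LR).
rewrite /Rs /conv big_ord_recl big_ord0 /= /Ep /sh /qshift /pshift /=.
rewrite !polyC_sc ?rmorphM /= ?rmorph_nat ?rmorphB /= ?rmorph1 ?rmorph_nat !derivE.
rewrite ?expr0 ?bin0 !(mulr0, mul0r, addr0, mulr1, add0r, mul1r).
idtac "G"; match goal with |- ?g => idtac g end.
ring.
Qed.

Lemma eval_rec (x : R) n : p_eval n.+1 x =
  x * \sum_(k < n.+1) 'C(n, k)%:R * ((2%:R * (1 - x)) ^+ k * p_eval (n - k).+1 x)
  + (1 - x) * (p_eval n x + (2%:R * (1 - x)) ^+ n).
Proof.
have H : pshift n.+1 = 'X * conv Ep (sh pshift) n + (1 - 'X) * (pshift n + Ep n).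
  by apply/eqP; rewrite -subr_eq0; apply/eqP; rewrite -(Rs0 n) /Rs; ring.
rewrite /p_eval H /conv /sh /Ep; clear H; generalize pshift => P.
rewrite hornerD hornerM hornerX.
rewrite -horner_evalE raddf_sum /=. under eq_bigr => i _ do rewrite horner_evalE !hornerE.
rewrite !hornerE.
congr (_ * _ + _).
apply: eq_bigr => i _; rewrite hornerMn -polyC1 hornerC mulrA //.
Qed.

Local Close Scope ring_scope.
Local Open Scope R_scope.
Definition cc (x : R) := 2 * (1 - x).
Definition ea (x : R) (n : nat) := cc x ^ n / INR (fact n).
Definition aa (x : R) (n : nat) := p_eval n x / INR (fact n).

Local Open Scope ring_scope.
Lemma fact_nz n : ((n`!)%:R : R) != 0.
Proof. by rewrite pnatr_eq0 -lt0n fact_gt0. Qed.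

Lemma coef_rel x n : PS_derive (aa x) n =
  (x * PS_mult (ea x) (PS_derive (aa x)) n + (1 - x) * (aa x n + ea x n))%R.
Proof.
rewrite /PS_derive /PS_mult /aa /ea /cc sum_f_R0E ?RealsE ?INRE ?factE ?RpowE.
rewrite big_mkord eval_rec.
have e2 : ((nat_of_pos 2)%:R : R) = 2%:R by [].
rewrite e2.
under [X in _ = x * X + _]eq_bigr => i _ do rewrite ?minusE ?RealsE ?INRE ?factE ?RpowE.
have -> : \sum_(i < n.+1)
     ((2%:R * (1 - x)) ^+ i / (i`!)%:R *
      ((n - i).+1%:R * (p_eval (n - i).+1 x / ((n - i).+1`!)%:R)))
   = (\sum_(k < n.+1) 'C(n, k)%:R * ((2%:R * (1 - x)) ^+ k * p_eval (n - k).+1 x)) / n`!%:R.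
  rewrite mulr_suml; apply: eq_bigr => [[k hk]] _ /=.
  have hkn : (k <= n)%N by rewrite -ltnS.
  have hb := bin_fact hkn.
  have hbR : ('C(n, k)%:R * (k`!%:R * (n - k)`!%:R) = n`!%:R :> R)%R.
    by rewrite -!natrM hb.
  rewrite factS natrM -hbR.
  have h1 := fact_nz k. have h2 := fact_nz (n - k).
  have h3 : ((n - k).+1%:R : R) != 0%R by rewrite pnatr_eq0.
  have h4 : ('C(n, k)%:R : R) != 0 by rewrite pnatr_eq0 -lt0n bin_gt0.
  have h5 : (1 + (n - k)%:R) != 0 :> R by rewrite nat1r pnatr_eq0.
  by field; rewrite h1 h2 h4 h5.
rewrite factS natrM.
have h1 := fact_nz n.
have h3 : (n.+1%:R : R) != 0%R by rewrite pnatr_eq0.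
have h5 : (1 + n%:R) != 0 :> R by rewrite nat1r pnatr_eq0.
by field; rewrite h1 h5.
Qed.

Local Open Scope ring_scope.

Lemma geo (q : R) n : 0 <= q -> q <= 2^-1 -> \sum_(k < n) q ^+ k.+1 <= 2 * q.
Proof.
move=> h0 h1; elim: n => [|n IH]; first by rewrite big_ord0; lra.
rewrite big_ord_recl /=.
have -> : \sum_(i < n) q ^+ (bump 0 i).+1 = q * \sum_(k < n) q ^+ k.+1.
  by rewrite mulr_sumr; apply: eq_bigr => i _; rewrite exprS.
rewrite expr1.
have : q * \sum_(k < n) q ^+ k.+1 <= q * (2 * q) by rewrite ler_wpM2l.
nra.
Qed.

Lemma two : (nat_of_pos 2)%:R = 2 :> R. Proof. by []. Qed.

Lemma aa0 x : aa x 0 = 0.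
Proof. by rewrite /aa /p_eval /pshift /= horner0 RealsE mul0r. Qed.

Lemma ea_ge0 x n : 0 < x < 1 -> 0 <= ea x n.
Proof.
move=> /andP [h0 h1].
rewrite /ea /cc ?RealsE ?INRE ?factE ?RpowE ?two divr_ge0 // exprn_ge0 //; lra.
Qed.

Lemma ea_le x n : 0 < x < 1 -> ea x n <= 4 ^+ n.
Proof.
move=> /andP [h0 h1].
rewrite /ea /cc ?RealsE ?INRE ?factE ?RpowE ?two.
have hf : 1 <= (n`!)%:R :> R by rewrite ler1n fact_gt0.
have hc : 0 <= (2 * (1 - x)) ^+ n by rewrite exprn_ge0 //; lra.
have hc4 : (2 * (1 - x)) ^+ n <= 4 ^+ n by rewrite lerXn2r // ?nnegrE; lra.
apply: le_trans hc4; rewrite ler_pdivrMr; last lra.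
by rewrite ler_peMr.
Qed.

Lemma rec_split x n : PS_derive (aa x) n =
  x * (PS_derive (aa x) n + \sum_(0 <= k < n) ea x k.+1 * PS_derive (aa x) (n - k.+1))
  + (1 - x) * (aa x n + ea x n).
Proof.
rewrite {1}coef_rel /PS_mult sum_f_R0E big_nat_recl //.
have -> : ea x 0 = 1 by rewrite /ea /= RealsE -RinvE Rinv_1 mulr1.
under eq_bigr => i _ do rewrite minusE.
by rewrite RmultE mul1r minusE subn0.
Qed.

Lemma ea_le_c x n : 0 < x < 1 -> ea x n <= (2 * (1 - x)) ^+ n.
Proof.
move=> /andP [h0 h1].
rewrite /ea /cc ?RealsE ?INRE ?factE ?RpowE ?two.
have hf : 1 <= (n`!)%:R :> R by rewrite ler1n fact_gt0.
have hc : 0 <= (2 * (1 - x)) ^+ n by rewrite exprn_ge0 //; lra.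
rewrite ler_pdivrMr; last lra.
by rewrite ler_peMr.
Qed.

Lemma PSd x n : PS_derive (aa x) n = n.+1%:R * aa x n.+1.
Proof. by rewrite /PS_derive RealsE INRE. Qed.

Lemma aa_bound x : 0 < x < 1 -> forall n, 0 <= aa x n <= 4 ^+ n.
Proof.
move=> hx.
have hx' := hx; move/andP: hx' => [h0 h1].
suff H : forall n j, (j <= n)%N -> 0 <= aa x j <= 4 ^+ j by move=> n; exact: (H n).
elim => [|n IH] j hj.
  by move: hj; rewrite leqn0 => /eqP ->; rewrite aa0 expr0 lexx ler01.
case: (ltnP j n.+1) => hj'; first by apply: IH; rewrite -ltnS.
have -> : j = n.+1 by apply/eqP; rewrite eqn_leq hj hj'.
set S := \sum_(0 <= k < n) ea x k.+1 * PS_derive (aa x) (n - k.+1).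
have hrec := rec_split x n; rewrite -/S in hrec.
have hS : 0 <= S <= 4 * (1 - x) * n%:R * 4 ^+ n.
  have hterm : forall k : 'I_n, 0 <= ea x k.+1 * PS_derive (aa x) (n - k.+1)
      <= n%:R * 4 ^+ n.+1 * ((1 - x) / 2) ^+ k.+1.
    move=> [k hk] /=.
    have hnk : (n - k.+1).+1 = (n - k)%N by rewrite subnSK.
    rewrite PSd hnk.
    have /andP [ha1 ha2] := IH (n - k)%N (leq_subr _ _).
    have hnk2 : (n - k)%:R <= n%:R :> R by rewrite ler_nat leq_subr.
    have he1 := ea_ge0 x k.+1 hx.
    have he2 := ea_le_c x k.+1 hx.
    have hexp : n%:R * 4 ^+ n.+1 * ((1 - x) / 2) ^+ k.+1
        = n%:R * 4 ^+ (n - k) * (2 * (1 - x)) ^+ k.+1.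
      have e4 : 4 ^+ n.+1 = 4 ^+ (n - k) * 4 ^+ k.+1 :> R.
        by rewrite -exprD addnS subnK // ltnW.
      rewrite e4 !exprMn ?exprVn.
      have -> : 4 = 2 * 2 :> R by rewrite -natrM.
      rewrite !exprMn. field.
      by rewrite expf_neq0 // pnatr_eq0.
    rewrite hexp; apply/andP; split.
      by apply: mulr_ge0 => //; apply: mulr_ge0 => //; rewrite ler0n.
    have hp4 : 0 <= 4 ^+ (n - k) :> R by rewrite exprn_ge0 // ler0n.
    have hn0 : 0 <= (n - k)%:R :> R by rewrite ler0n.
    have h1' : (n - k)%:R * aa x (n - k) <= n%:R * 4 ^+ (n - k).
      by apply: ler_pM.
    have h2' : 0 <= (n - k)%:R * aa x (n - k) by apply: mulr_ge0.
    rewrite [X in _ <= X]mulrC.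
    by apply: ler_pM.
  rewrite /S big_mkord; apply/andP; split.
    by apply: sumr_ge0 => k _; case/andP: (hterm k).
  apply: le_trans (_ : \sum_(k < n) n%:R * 4 ^+ n.+1 * ((1 - x) / 2) ^+ k.+1 <= _).
    by apply: ler_sum => k _; case/andP: (hterm k).
  rewrite -mulr_sumr.
  have hg := @geo ((1 - x) / 2) n.
  have hq0 : 0 <= (1 - x) / 2 by lra.
  have hq1 : (1 - x) / 2 <= 2^-1 by lra.
  have := hg hq0 hq1.
  have hN : 0 <= n%:R * 4 ^+ n.+1 :> R by rewrite mulr_ge0 // ?ler0n // exprn_ge0 // ler0n.
  move=> hg'; apply: le_trans (ler_wpM2l hN hg') _.
  rewrite exprS ?RdivE. set P := 4 ^+ n. set N := n%:R. have -> : N * (4 * P) * (2 * ((1 - x) / 2)) = 4 * (1 - x) * N * P by field. by [].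
rewrite PSd in hrec.
have /andP [hA1 hA2] := IH n (leqnn n).
have he1 := ea_ge0 x n hx.
have he2 := ea_le x n hx.
case/andP: hS => hS1 hS2.
set a1 := aa x n.+1 in hrec *.
set N := n%:R in hS2 hrec *.
set P := 4 ^+ n in hA2 he2 hS2 *.
set A := aa x n in hrec hA1 hA2.
set e := ea x n in hrec he1 he2.
have hN : 0 <= N by rewrite ler0n.
have hP : 0 < P by rewrite exprn_gt0.
have hN1 : n.+1%:R = N + 1 by rewrite -natr1.
rewrite hN1 in hrec.
have eq1 : (1 - x) * ((N + 1) * a1) = x * S + (1 - x) * (A + e) by lra.
have hpos : 0 < (1 - x) * (N + 1) by apply: mulr_gt0; lra.
have hrhs0 : 0 <= x * S + (1 - x) * (A + e).
  by apply: addr_ge0; apply: mulr_ge0; lra.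
have hrhs1 : x * S + (1 - x) * (A + e) <= (1 - x) * (N + 1) * (4 * P).
  have : x * S <= x * (4 * (1 - x) * N * P) by apply: ler_wpM2l; lra.
  have : x * (4 * (1 - x) * N * P) <= (1 - x) * (4 * N * P).
    have -> : x * (4 * (1 - x) * N * P) = (1 - x) * (x * (4 * N * P)) by ring.
    apply: ler_wpM2l; first lra.
    have h4 : 0 <= 4 * N * P by apply: mulr_ge0; [apply: mulr_ge0; lra | exact: ltW].
    have : 0 <= (1 - x) * (4 * N * P) by apply: mulr_ge0 => //; lra.
    lra.
  have : (1 - x) * (A + e) <= (1 - x) * (2 * P) by apply: ler_wpM2l; lra.
  move=> h3 h2 h1x.
  have -> : (1 - x) * (N + 1) * (4 * P) = (1 - x) * (4 * N * P) + (1 - x) * (4 * P) by ring.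
  have : (1 - x) * (2 * P) <= (1 - x) * (4 * P) by apply: ler_wpM2l; lra.
  lra.
rewrite exprS; apply/andP; split.
  rewrite -(pmulr_rge0 _ hpos) -mulrA; lra.
rewrite -(ler_pM2l hpos) -mulrA -/P; lra.
Qed.

Local Close Scope ring_scope.
Local Open Scope R_scope.

Lemma four_eq : IZR 4 = GRing.natmul (GRing.one R) 4.
Proof. by rewrite IZRposE INRE. Qed.

Lemma aa_bnd x : 0 < x < 1 -> forall n, 0 <= aa x n <= 4 ^ n.
Proof.
intros [h0 h1] n.
have hx : ((0 < x) && (x < 1))%R by apply/andP; split; apply/RltP.
have /andP [a1 a2] := aa_bound x hx n.
split; [apply/RleP; exact a1|].
rewrite RpowE four_eq; apply/RleP; exact a2.
Qed.

Lemma ea_bnd x : 0 < x < 1 -> forall n, 0 <= ea x n <= 4 ^ n.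
Proof.
intros [h0 h1] n.
have hx : ((0 < x) && (x < 1))%R by apply/andP; split; apply/RltP.
split; [apply/RleP; exact: (ea_ge0 x n hx)|].
rewrite RpowE four_eq; apply/RleP; exact: (ea_le x n hx).
Qed.

Lemma rad_ge a r : CV_disk a r -> Rbar_le r (CV_radius a).
Proof.
intros H. unfold CV_radius. destruct (Lub_Rbar_correct (CV_disk a)) as [H1 _].
apply H1, H.
Qed.

Lemma rad_bnd a : (forall n, 0 <= a n <= 4 ^ n) -> Rbar_le (1/5) (CV_radius a).
Proof.
intros H. apply rad_ge. unfold CV_disk.
apply (@ex_series_le R_AbsRing R_CompleteNormedModule _ (fun n => (4/5) ^ n)).
- intros n. change norm with Rabs. rewrite Rabs_Rabsolu Rabs_mult -RPow_abs.
  rewrite (Rabs_right (1/5)); last slra.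
  replace ((4/5)^n) with (4^n * (1/5)^n) by (rewrite -Rpow_mult_distr; f_equal; slra).
  apply Rmult_le_compat_r; [apply pow_le; slra|].
  rewrite Rabs_right; [apply H | apply Rle_ge, H].
- apply ex_series_geom. rewrite Rabs_right; slra.
Qed.

Lemma rad_lt a t : Rbar_le (1/5) (CV_radius a) -> Rabs t < 1/5 -> Rbar_lt (Rabs t) (CV_radius a).
Proof. intros H Ht. exact: (@Rbar_lt_le_trans (Rabs t) (1/5) _ Ht H). Qed.

Lemma exp_ea x t : PSeries (ea x) t = exp (2 * (1 - x) * t).
Proof.
apply is_pseries_unique.
have H := is_exp_Reals (cc x * t).
unfold is_pseries in *. unfold cc in H.
apply: (is_series_ext _ _ _ _ H) => n.
rewrite !pow_n_pow /scal /= /mult /= /ea /cc Rpow_mult_distr.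
rewrite /Rdiv. sring.
Qed.

Lemma is_series_lin (u v w : nat -> R) (lu lv lw a b : R) :
  is_series u lu -> is_series v lv -> is_series w lw ->
  is_series (fun n => a * u n + b * (v n + w n)) (a * lu + b * (lv + lw)).
Proof.
intros hu hv hw.
have h1 := is_series_scal a _ _ hu.
have h2 := is_series_plus _ _ _ _ hv hw.
have h3 := is_series_scal b _ _ h2.
exact: (is_series_plus _ _ _ _ h1 h3).
Qed.

Lemma coef_relS x n : PS_derive (aa x) n =
  x * PS_mult (ea x) (PS_derive (aa x)) n + (1 - x) * (aa x n + ea x n).
Proof. exact: coef_rel. Qed.

Lemma g_ode x t : 0 < x < 1 -> Rabs t < 1/5 ->
  PSeries (PS_derive (aa x)) t =
  x * (exp (2 * (1 - x) * t) * PSeries (PS_derive (aa x)) t)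
  + (1 - x) * (PSeries (aa x) t + exp (2 * (1 - x) * t)).
Proof.
intros hx ht.
have ra : Rbar_lt (Rabs t) (CV_radius (aa x)) by apply: rad_lt => //; apply: rad_bnd; apply: aa_bnd.
have re : Rbar_lt (Rabs t) (CV_radius (ea x)) by apply: rad_lt => //; apply: rad_bnd; apply: ea_bnd.
have rd : Rbar_lt (Rabs t) (CV_radius (PS_derive (aa x))) by rewrite CV_radius_derive.
have He : is_pseries (ea x) t (exp (2 * (1 - x) * t)).
  rewrite -exp_ea; apply: PSeries_correct; exact: CV_radius_inside.
have Hd : is_pseries (PS_derive (aa x)) t (PSeries (PS_derive (aa x)) t).
  apply: PSeries_correct; exact: CV_radius_inside.
have Ha : is_pseries (aa x) t (PSeries (aa x) t).
  apply: PSeries_correct; exact: CV_radius_inside.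
have Hm := is_pseries_mult _ _ _ _ _ He Hd re rd.
apply: is_pseries_unique.
unfold is_pseries in *.
have := is_series_lin _ _ _ _ _ _ x (1 - x) Hm Ha He.
apply: is_series_ext => n.
rewrite coef_relS /scal /= /mult /=.
sring.
Qed.

Lemma xE_lt x c : 0 < x < 1 -> Rabs c < - ln x / 2 -> x * exp (2 * (1 - x) * c) < 1.
Proof.
intros [h0 h1] hc.
have hl : 2 * (1 - x) * c < - ln x.
  have : (1 - x) * c <= Rabs c.
    have := Rle_abs c. have := Rabs_pos c.
    have : (1 - x) * c <= (1 - x) * Rabs c by apply: Rmult_le_compat_l; [slra | apply: Rle_abs].
    snra.
  slra.
have := exp_increasing _ _ hl.
rewrite exp_Ropp exp_ln //.
move=> h.
have : x * exp (2 * (1 - x) * c) < x * / x by apply: Rmult_lt_compat_l.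
rewrite Rinv_r; [slra | apply: Rgt_not_eq; slra].
Qed.

Definition Kf x c := (ff x c - PSeries (aa x) c) ^ 2 * exp (- (2 * (1 - x)) * c)
   * (1 - x * exp (2 * (1 - x) * c)).

Lemma Kf_deriv x c : 0 < x < 1 -> Rabs c < 1/5 -> x * exp (2 * (1 - x) * c) < 1 ->
  is_derive (Kf x) c 0.
Proof.
intros hx hc hE.
have ra : Rbar_lt (Rabs c) (CV_radius (aa x)) by apply: rad_lt => //; apply: rad_bnd; apply: aa_bnd.
have Hg := is_derive_PSeries _ _ ra.
have Hf := ff_deriv x c hx hE.
have Hode := g_ode x c hx hc.
unfold Kf.
auto_derive.
  split; [by exists ((1 - x) * (ff x c + exp (2 * (1 - x) * c)) / (1 - x * exp (2 * (1 - x) * c)))|].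
  split; [by exists (PSeries (PS_derive (aa x)) c)|done].
rewrite (is_derive_unique _ _ _ Hf) (is_derive_unique _ _ _ Hg).
set E := exp (2 * (1 - x) * c) in Hode hE *.
set G' := PSeries (PS_derive (aa x)) c in Hode *.
have hG : G' = (1 - x) * (PSeries (aa x) c + E) / (1 - x * E).
  apply: (Rmult_eq_reg_r (1 - x * E)); last by apply: Rgt_not_eq; slra.
  rewrite /Rdiv Rmult_assoc Rinv_l; last by apply: Rgt_not_eq; slra.
  slra.
rewrite hG.
sfield. slra.
Qed.

Lemma aa0S x : aa x 0 = 0.
Proof. exact: aa0. Qed.

Lemma ff0 x : ff x 0 = 0.
Proof. rewrite /ff Rmult_0_r exp_0 Rmult_1_r Rminus_diag Rmult_0_r /Rdiv Rmult_0_l //. Qed.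

Theorem proposition3p3 (x : R) (hx0 : 0 < x) (hx1 : x < 1) :
  exists delta : R, 0 < delta /\
    forall t : R, Rabs t < delta ->
      is_series (fun n : nat => p_eval n x * t ^ n / INR (fact n))
        (exp ((1 - x) * t) *
           (asin (sqrt x * exp ((1 - x) * t)) - asin (sqrt x)) /
         (sqrt x * sqrt (1 - x * exp (2 * (1 - x) * t)))).
Proof.
have hx : 0 < x < 1 by split.
have hln : 0 < - ln x / 2.
  have : ln x < 0 by rewrite -ln_1; apply: ln_increasing.
  slra.
exists (Rmin (1/8) (- ln x / 2)); split.
  apply: Rmin_pos => //; slra.
move=> t ht.
have ht1 : Rabs t < 1/5 by have := Rmin_l (1/8) (- ln x / 2); slra.
have ht2 : Rabs t < - ln x / 2 by have := Rmin_r (1/8) (- ln x / 2); slra.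
have ra : Rbar_lt (Rabs t) (CV_radius (aa x)) by apply: rad_lt => //; apply: rad_bnd; apply: aa_bnd.
have Ha : is_pseries (aa x) t (PSeries (aa x) t).
  apply: PSeries_correct; exact: CV_radius_inside.
have Heq : ff x t = PSeries (aa x) t.
  have [c [hc1 _]] : exists c, Kf x t - Kf x 0 = 0 * (t - 0) /\ Rabs (c - 0) <= Rabs (t - 0).
    apply: (MVT_cor4 (Kf x) (fun _ => 0) 0 (Rabs t)).
      move=> c hc. rewrite Rminus_0_r in hc.
      apply: Kf_deriv => //; [slra|apply: xE_lt => //; slra].
    by rewrite Rminus_0_r; apply: Rle_refl.
  have hK0 : Kf x 0 = 0 by rewrite /Kf ff0 PSeries_0 aa0S; sring.
  rewrite hK0 Rmult_0_l Rminus_0_r in hc1.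
  move: hc1; rewrite /Kf.
  have hE := xE_lt x t hx ht2.
  have hp := exp_pos (- (2 * (1 - x)) * t).
  set d := ff x t - PSeries (aa x) t.
  move=> h.
  have hd2 : d ^ 2 = 0.
    apply: (Rmult_eq_reg_r (exp (- (2 * (1 - x)) * t) * (1 - x * exp (2 * (1 - x) * t)))).
      rewrite Rmult_0_l -Rmult_assoc; exact h.
    apply: Rgt_not_eq; apply: Rmult_lt_0_compat; slra.
  have : d = 0 by apply: Rsqr_0_uniq; rewrite /Rsqr; move: hd2; rewrite /= Rmult_1_r.
  rewrite /d; slra.
change (is_series (fun n : nat => p_eval n x * t ^ n / INR (fact n)) (ff x t)).
rewrite Heq.
unfold is_pseries in Ha.
apply: (is_series_ext _ _ _ _ Ha) => n.
rewrite pow_n_pow /scal /= /mult /= /aa /Rdiv; sring.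
Qed.
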